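(* Let $d\ge2$ and $n\ge2$. There is no polynomial $\varphi$ in the coefficients of $f\in\mathbb R[x]_d$ with $\varphi(f)>0$ for all $f$ in the interior of $\mathcal C_{n,d}$ and $\varphi(f)=0$ for all $f$ on the boundary of $\mathcal C_{n,d}$. Consequently $-\log\varphi(f)$ cannot be a barrier for $\mathcal C_{n,d}$ with $\varphi$ polynomial, and $\mathcal C_{n,d}$ is not representable by a linear matrix inequality (no symmetric matrix pencil $L(f)$ linear in the coefficients of $f$ with $\mathcal C_{n,d}=\{f:L(f)\succeq0\}$ and $L(f)\succ0$ on the interior).
   Context: $x=(x_1,\dots,x_n)$; $\mathbb R[x]_d$ is the space of real forms of degree $d$ with the Euclidean topology on coefficients. $\mathcal C_{n,d}=\{f\in\mathbb R[x]_d: f(x)\ge0\ \forall x\in\mathbb R^n_+\}$ is the cone of copositive forms. *)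

(* Defs.v *)
From Stdlib Require Import Reals.
From mathcomp Require Import all_boot.

Set Implicit Arguments.
Unset Strict Implicit.
Unset Printing Implicit Defensive.
Delimit Scope R_scope with Re.

Definition mon (n d : nat) :=
  {a : {ffun 'I_n -> 'I_d.+1} | (\sum_(i < n) (nat_of_ord (a i)) == d)%N}.

(* A real form of degree d in n variables = its coefficient vector
   (R[x]_d is identified with R^{monomials}). *)
Definition form (n d : nat) := mon n d -> R.

Definition eval_form (n d : nat) (f : form n d) (x : 'I_n -> R) : R :=
  \big[Rplus/0%Re]_(a : mon n d)
     (f a * \big[Rmult/1%Re]_(i < n) (x i ^ (nat_of_ord (val a i))))%Re.

Definition copositive (n d : nat) (f : form n d) : Prop :=
  forall x : 'I_n -> R, (forall i, (0 <= x i)%Re) -> (0 <= eval_form f x)%Re.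

(* Euclidean topology on coefficients, via the (equivalent) sup-norm. *)
Definition cdist (n d : nat) (f g : form n d) : R :=
  \big[Rmax/0%Re]_(a : mon n d) Rabs (f a - g a).

Definition cinterior (n d : nat) (S : form n d -> Prop) (f : form n d) : Prop :=
  exists eps : R, (0 < eps)%Re /\ forall g, (cdist f g < eps)%Re -> S g.

Definition cboundary (n d : nat) (S : form n d -> Prop) (f : form n d) : Prop :=
  forall eps : R, (0 < eps)%Re ->
    (exists g, (cdist f g < eps)%Re /\ S g) /\
    (exists g, (cdist f g < eps)%Re /\ ~ S g).

Definition poly_in_coeffs (n d : nat) (phi : form n d -> R) : Prop :=
  exists s : list (R * (mon n d -> nat)),
    forall f : form n d,
      phi f = foldr
                (fun (t : R * (mon n d -> nat)) acc =>
                   (fst t * \big[Rmult/1%Re]_(a : mon n d) (f a ^ snd t a) + acc)%Re)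
                0%Re s.

Definition rmat (m : nat) := 'I_m -> 'I_m -> R.

Definition sym_mat (m : nat) (A : rmat m) : Prop := forall i j, A i j = A j i.

Definition qform (m : nat) (A : rmat m) (v : 'I_m -> R) : R :=
  \big[Rplus/0%Re]_(i < m) \big[Rplus/0%Re]_(j < m) (v i * A i j * v j)%Re.

Definition psd (m : nat) (A : rmat m) : Prop := forall v, (0 <= qform A v)%Re.

Definition pd (m : nat) (A : rmat m) : Prop :=
  forall v, (exists i, v i <> 0%Re) -> (0 < qform A v)%Re.

Definition pencil (n d m : nat) (L0 : rmat m) (La : mon n d -> rmat m)
  (f : form n d) : rmat m :=
  fun i j => (L0 i j + \big[Rplus/0%Re]_(a : mon n d) (f a * La a i j))%Re.

Definition lmi_representable (n d : nat) : Prop :=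
  exists (m : nat) (L0 : rmat m) (La : mon n d -> rmat m),
    sym_mat L0 /\ (forall a, sym_mat (La a)) /\
    (forall f : form n d, copositive f <-> psd (pencil L0 La f)) /\
    (forall f : form n d, cinterior (@copositive n d) f -> pd (pencil L0 La f)).

(* Main.v *)
From HB Require Import structures.
From Stdlib Require Import Reals Lra Psatz ClassicalEpsilon FunctionalExtensionality Classical.
From mathcomp Require Import all_boot all_algebra perm.
Require Import Defs.

Set Implicit Arguments.
Unset Strict Implicit.
Unset Printing Implicit Defensive.

Local Open Scope R_scope.
Ltac rring := (try (match goal with |- @eq _ ?a ?b => change (@eq R a b) end)); ring.




Fixpoint peval (l : list R) (x : R) : R :=
  match l with nil => 0 | c :: l' => c + x * peval l' x end.
Fixpoint padd (l1 l2 : list R) : list R :=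
  match l1, l2 with
  | nil, _ => l2
  | _, nil => l1
  | a :: l1', b :: l2' => (a + b) :: padd l1' l2'
  end.
Lemma padd_ok l1 l2 x : peval (padd l1 l2) x = peval l1 x + peval l2 x.
Proof.
elim: l1 l2 => [|a l1 IH] [|b l2] /=; try ring.
rewrite IH; ring.
Qed.
Definition pscale (c : R) (l : list R) := map (Rmult c) l.
Lemma pscale_ok c l x : peval (pscale c l) x = c * peval l x.
Proof. elim: l => [|a l IH] /=; [ring| rewrite IH; ring]. Qed.
Fixpoint pmul (l1 l2 : list R) : list R :=
  match l1 with nil => nil | a :: l1' => padd (pscale a l2) (0 :: pmul l1' l2) end.
Lemma pmul_ok l1 l2 x : peval (pmul l1 l2) x = peval l1 x * peval l2 x.
Proof. elim: l1 => [|a l1 IH] /=; first ring.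
rewrite padd_ok pscale_ok /= IH; ring. Qed.

Definition IsPoly (g : R -> R) := exists l, forall x, g x = peval l x.

Lemma IsPoly_const c : IsPoly (fun _ => c).
Proof. exists [:: c] => x /=; ring. Qed.
Lemma IsPoly_id : IsPoly (fun x => x).
Proof. exists [:: 0; 1] => x /=; ring. Qed.
Lemma IsPoly_add f g : IsPoly f -> IsPoly g -> IsPoly (fun x => f x + g x).
Proof. move=> [l1 h1] [l2 h2]; exists (padd l1 l2) => x; by rewrite padd_ok h1 h2. Qed.
Lemma IsPoly_mul f g : IsPoly f -> IsPoly g -> IsPoly (fun x => f x * g x).
Proof. move=> [l1 h1] [l2 h2]; exists (pmul l1 l2) => x; by rewrite pmul_ok h1 h2. Qed.
Lemma IsPoly_ext f g : IsPoly f -> (forall x, f x = g x) -> IsPoly g.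
Proof. move=> [l h] e; exists l => x; by rewrite -e. Qed.
Lemma IsPoly_pow f k : IsPoly f -> IsPoly (fun x => f x ^ k).
Proof. move=> hf; elim: k => [|k IH] /=; first exact: IsPoly_const.
exact: IsPoly_mul. Qed.
Ltac ispoly := repeat first [ apply: IsPoly_add | apply: IsPoly_mul | apply: IsPoly_pow | apply: IsPoly_id | apply: IsPoly_const ].


Lemma IsPoly_big (I : Type) (op : R -> R -> R) (idx : R)
  (Hop : forall a b, op a b = a + b \/ (forall a b, op a b = a * b)) : True.
Proof. by []. Qed.

Lemma IsPoly_bigop (I : Type) (op : R -> R -> R) (idx : R)
  (Hop : forall f g, IsPoly f -> IsPoly g -> IsPoly (fun x => op (f x) (g x)))
  (r : seq I) (P : pred I) (F : I -> R -> R) :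
  (forall i, IsPoly (F i)) -> IsPoly (fun x => \big[op/idx]_(i <- r | P i) F i x).
Proof.
move=> hF; elim: r => [|i r IH].
  apply: (IsPoly_ext (IsPoly_const idx)) => x; by rewrite big_nil.
case hP: (P i).
  apply: (IsPoly_ext (Hop _ _ (hF i) IH)) => x; by rewrite big_cons hP.
apply: (IsPoly_ext IH) => x; by rewrite big_cons hP.
Qed.

Fixpoint sabs (l : list R) : R := match l with nil => 0 | c :: l' => Rabs c + sabs l' end.
Lemma sabs_ge0 l : 0 <= sabs l.
Proof. elim: l => [|c l IH] /=; [lra| have := Rabs_pos c; lra]. Qed.
Lemma peval_bound l x : 0 <= x <= 1 -> Rabs (peval l x) <= sabs l.
Proof.
move=> hx; elim: l => [|c l IH] /=; first by rewrite Rabs_R0; lra.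
apply: Rle_trans (Rabs_triang _ _) _.
rewrite Rabs_mult; apply: Rplus_le_compat_l.
have h1 : Rabs x <= 1 by rewrite Rabs_pos_eq; lra.
have h2 := Rabs_pos (peval l x); have h3 := Rabs_pos x.
nra.
Qed.

Lemma peval_zero l : (forall x, 0 < x -> peval l x = 0) -> forall x, peval l x = 0.
Proof.
elim: l => [|c l IH] /= h x; first by [].
have hc : c = 0.
  apply: NNPP => hc.
  have ha : 0 < Rabs c by apply: Rabs_pos_lt.
  have hB := sabs_ge0 l.
  set y := Rmin 1 (Rabs c / (2 * ((sabs l) + 1))).
  have hy0 : 0 < y.
    rewrite /y; apply: Rmin_glb_lt; first lra.
    apply: Rdiv_lt_0_compat; lra.
  have hy1 : y <= 1 by apply: Rmin_l.
  have hy2 : y <= Rabs c / (2 * ((sabs l) + 1)) by apply: Rmin_r.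
  have e := h y hy0.
  have hb := peval_bound l (conj (Rlt_le _ _ hy0) hy1).
  have : Rabs c = Rabs (y * peval l y).
    by rewrite -Rabs_Ropp; f_equal; lra.
  rewrite Rabs_mult (Rabs_pos_eq y); last lra.
  move=> e2.
  have : y * (sabs l) <= Rabs c / (2 * ((sabs l) + 1)) * (sabs l) by apply: Rmult_le_compat_r.
  have : Rabs c / (2 * ((sabs l) + 1)) * (sabs l) < Rabs c.
    rewrite /Rdiv.
    have ht : / (2 * ((sabs l) + 1)) * (2 * ((sabs l) + 1)) = 1 by field; lra.
    have ht0 : 0 < / (2 * ((sabs l) + 1)) by apply: Rinv_0_lt_compat; lra.
    nra.
  have : y * Rabs (peval l y) <= y * (sabs l) by apply: Rmult_le_compat_l; lra.
  lra.
subst c.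
have h' : forall x, 0 < x -> peval l x = 0.
  move=> y hy; have := h y hy.
  move=> e; have : y * peval l y = 0 by lra.
  case/Rmult_integral => //; lra.
rewrite (IH h' x); ring.
Qed.

Lemma IsPoly_zero g : IsPoly g -> (forall x, 0 < x -> g x = 0) -> forall x, g x = 0.
Proof.
move=> [l hl] h x; rewrite hl; apply: peval_zero => y hy; by rewrite -hl h.
Qed.




Lemma R_addA : associative Rplus. Proof. move=> *; ring. Qed.
Lemma R_addC : commutative Rplus. Proof. move=> *; ring. Qed.
Lemma R_add0 : left_id R0 Rplus. Proof. move=> *; ring. Qed.
Lemma R_mulA : associative Rmult. Proof. move=> *; ring. Qed.
Lemma R_mulC : commutative Rmult. Proof. move=> *; ring. Qed.
Lemma R_mul1 : left_id R1 Rmult. Proof. move=> *; ring. Qed.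
Lemma R_mulD : left_distributive Rmult Rplus. Proof. move=> *; ring. Qed.
Lemma R_mulDr : right_distributive Rmult Rplus. Proof. move=> *; ring. Qed.
Lemma R_mul0l : left_zero R0 Rmult. Proof. move=> *; ring. Qed.
Lemma R_mul0r : right_zero R0 Rmult. Proof. move=> *; ring. Qed.
HB.instance Definition _ := Monoid.isComLaw.Build R R0 Rplus R_addA R_addC R_add0.
HB.instance Definition _ := Monoid.isComLaw.Build R R1 Rmult R_mulA R_mulC R_mul1.
HB.instance Definition _ := Monoid.isMulLaw.Build R R0 Rmult R_mul0l R_mul0r.
HB.instance Definition _ := Monoid.isAddLaw.Build R Rmult Rplus R_mulD R_mulDr.

Lemma sumR_ge0 (I : Type) (r : seq I) (P : pred I) (F : I -> R) :
  (forall i, P i -> 0 <= F i) -> 0 <= \big[Rplus/0]_(i <- r | P i) F i.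
Proof. move=> h; apply: (big_ind (fun y => 0 <= y)) => //; [lra | move=> *; lra]. Qed.

Lemma sumR_le (I : Type) (r : seq I) (P : pred I) (F G : I -> R) :
  (forall i, P i -> F i <= G i) ->
  \big[Rplus/0]_(i <- r | P i) F i <= \big[Rplus/0]_(i <- r | P i) G i.
Proof. move=> h; apply: (big_ind2 (fun y z => y <= z)) => //; [lra | move=> *; lra]. Qed.

Lemma prodR_ge0 (I : Type) (r : seq I) (P : pred I) (F : I -> R) :
  (forall i, P i -> 0 <= F i) -> 0 <= \big[Rmult/1]_(i <- r | P i) F i.
Proof. move=> h; apply: (big_ind (fun y => 0 <= y)) => //; [lra | move=> *; exact: Rmult_le_pos]. Qed.

Lemma sumR_ge_term (I : finType) (F : I -> R) j :
  (forall i, 0 <= F i) -> F j <= \big[Rplus/0]_i F i.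
Proof.
move=> h; rewrite (bigD1 j) //=.
have := @sumR_ge0 I (index_enum I) (fun i => i != j) F (fun i _ => h i); lra.
Qed.

Lemma maxR_ge (I : finType) (F : I -> R) j : F j <= \big[Rmax/0]_i F i.
Proof.
have : j \in index_enum I by rewrite mem_index_enum.
elim: (index_enum I) => [|k r IH] //=.
rewrite inE big_cons; case/orP => [/eqP ->|hj]; first exact: Rmax_l.
apply: Rle_trans (IH hj) _; exact: Rmax_r.
Qed.

Lemma maxR_le (I : finType) (F : I -> R) c :
  0 <= c -> (forall i, F i <= c) -> \big[Rmax/0]_i F i <= c.
Proof. move=> h0 h; apply: (big_ind (fun y => y <= c)) => // x y hx hy; exact: Rmax_lub. Qed.

Lemma sumR_distrr (I : Type) (r : seq I) (P : pred I) (F : I -> R) c :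
  c * \big[Rplus/0]_(i <- r | P i) F i = \big[Rplus/0]_(i <- r | P i) (c * F i).
Proof. by rewrite big_distrr. Qed.
Lemma sumR_distrl (I : Type) (r : seq I) (P : pred I) (F : I -> R) c :
  \big[Rplus/0]_(i <- r | P i) F i * c = \big[Rplus/0]_(i <- r | P i) (F i * c).
Proof. by rewrite big_distrl. Qed.

Lemma sumR_delta (I : finType) (b : I) (G : I -> R) :
  \big[Rplus/0]_a ((if a == b then 1 else 0) * G a) = G b.
Proof.
rewrite (bigD1 b) //= eqxx big1; first ring.
by move=> a /negbTE ->; ring.
Qed.

Section Forms.
Variables (n' d : nat).
Hypothesis hd : (2 <= d)%N.
Local Notation n := n'.+2.

Definition i0 : 'I_n := ord0.
Definition i1 : 'I_n := lift ord0 ord0.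
Definition i2 (i : 'I_n') : 'I_n := lift ord0 (lift ord0 i).

Definition exv (k : nat) : {ffun 'I_n -> 'I_d.+1} :=
  [ffun i : 'I_n => inord (if val i == 0%N then minn k d
                           else if val i == 1%N then (d - minn k d)%N else 0%N)].

Lemma sum_decompN (F : 'I_n -> nat) :
  (\sum_(i < n) F i = F i0 + (F i1 + \sum_(i < n') F (i2 i)))%N.
Proof. by rewrite big_ord_recl big_ord_recl. Qed.

Lemma prod_decompR (F : 'I_n -> R) :
  \big[Rmult/1]_(i < n) F i = F i0 * (F i1 * \big[Rmult/1]_(i < n') F (i2 i)).
Proof. by rewrite big_ord_recl big_ord_recl. Qed.

Lemma exv_i0 k : nat_of_ord (exv k i0) = minn k d.
Proof. rewrite ffunE /= inordK //; rewrite ltnS; exact: geq_minr. Qed.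
Lemma exv_i1 k : nat_of_ord (exv k i1) = (d - minn k d)%N.
Proof. rewrite ffunE /= inordK //; rewrite ltnS; exact: leq_subr. Qed.
Lemma exv_i2 k i : nat_of_ord (exv k (i2 i)) = 0%N.
Proof. by rewrite ffunE /= inordK. Qed.

Lemma exv_sum k : (\sum_(i < n) (nat_of_ord (exv k i)) == d)%N.
Proof.
rewrite sum_decompN exv_i0 exv_i1 big1 ?addn0; last by move=> i _; rewrite exv_i2.
rewrite subnKC //; exact: geq_minr.
Qed.

Definition em (k : nat) : mon n d := exist _ (exv k) (exv_sum k).

Definition X (a : mon n d) (x : 'I_n -> R) : R :=
  \big[Rmult/1]_(i < n) (x i ^ (nat_of_ord (val a i))).

Lemma X_em k x : (k <= d)%N -> X (em k) x = x i0 ^ k * x i1 ^ (d - k).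
Proof.
move=> hk; rewrite /X prod_decompR /= exv_i0 exv_i1 big1; last first.
  by move=> i _; rewrite exv_i2.
rewrite (minn_idPl hk); rring.
Qed.

Lemma X_ge0 a x : (forall i, 0 <= x i) -> 0 <= X a x.
Proof. move=> h; apply: prodR_ge0 => i _; exact: pow_le. Qed.

Definition xstar (w : R) : 'I_n -> R :=
  fun i => if val i == 0%N then 1 else if val i == 1%N then w else 0.

Lemma prod0pow (m : nat) (b : 'I_m -> nat) :
  (0 < \sum_(i < m) b i)%N -> \big[Rmult/1]_(i < m) (0 ^ b i) = 0.
Proof.
elim: m b => [|m IH] b; first by rewrite big_ord0.
rewrite big_ord_recl big_ord_recl.
case h0: (b ord0) => [|k] /=.
  rewrite add0n => h; rewrite IH //; rring.
by move=> _; rring.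
Qed.

Definition other (a : mon n d) : R :=
  if (nat_of_ord (val a i0) + nat_of_ord (val a i1) == d)%N then 0 else 1.

Lemma other_X_xstar a w : other a * X a (xstar w) = 0.
Proof.
rewrite /other; case: ifP => h; first ring.
rewrite /X prod_decompR prod0pow; first ring.
have := valP a; rewrite sum_decompN => /eqP e.
move: h e; move: (nat_of_ord (val a i0)) (nat_of_ord (val a i1)) (\sum_(i < n') _)%N => p q s.
case: s => [|s] // h e; exfalso; move: h; by rewrite -e addn0 eqxx.
Qed.

Definition delta (b a : mon n d) : R := if a == b then 1 else 0.

Definition Tw (w : R) (a : mon n d) : R :=
  \big[Rplus/0]_(j < d.-1)
     (delta (em j) a + (-2 * w) * delta (em j.+1) a + w ^ 2 * delta (em j.+2) a).

Definition fw (w : R) (a : mon n d) : R := Tw w a + other a.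

Lemma eval_lin (f g : form n d) c x :
  eval_form (fun a => f a + c * g a) x = eval_form f x + c * eval_form g x.
Proof.
rewrite /eval_form.
have -> : \big[Rplus/0]_a ((f a + c * g a) * \big[Rmult/1]_(i < n) x i ^ val a i) =
  \big[Rplus/0]_a (f a * \big[Rmult/1]_(i < n) x i ^ val a i +
           c * (g a * \big[Rmult/1]_(i < n) x i ^ val a i)).
  by apply: eq_bigr => a _; rring.
by rewrite big_split /= -sumR_distrr.
Qed.

Lemma eval_delta b x : eval_form (delta b) x = X b x.
Proof. exact: (sumR_delta b (fun a => X a x)). Qed.

Lemma sum_delta_c b c G :
  \big[Rplus/0]_(a : mon n d) (c * delta b a * G a) = c * G b.
Proof.
rewrite -(sumR_delta b G) sumR_distrr; apply: eq_bigr => a _; by rewrite Rmult_assoc.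
Qed.

Lemma eval_fw w x :
  eval_form (fw w) x =
  \big[Rplus/0]_(j < d.-1) (X (em j) x + (-2 * w) * X (em j.+1) x + w ^ 2 * X (em j.+2) x)
  + \big[Rplus/0]_a (other a * X a x).
Proof.
rewrite /eval_form.
have -> : \big[Rplus/0]_a (fw w a * \big[Rmult/1]_(i < n) x i ^ val a i) =
  \big[Rplus/0]_a (Tw w a * X a x + other a * X a x).
  apply: eq_bigr => a _; rewrite /fw /X; exact: Rmult_plus_distr_r.
rewrite big_split /=; congr (_ + _).
rewrite /Tw.
under eq_bigr do rewrite sumR_distrl.
rewrite exchange_big /=; apply: eq_bigr => j _.
have e1 := sum_delta_c (em j) 1 (fun a => X a x).
have e2 := sum_delta_c (em j.+1) (-2 * w) (fun a => X a x).
have e3 := sum_delta_c (em j.+2) (w ^ 2) (fun a => X a x).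
rewrite -e2 -e3 -[X (em j) x]Rmult_1_l -e1 -!big_split /=.
apply: eq_bigr => a _; rring.
Qed.

Lemma term_nonneg w x (j : 'I_d.-1) : 0 <= x i0 -> 0 <= x i1 ->
  0 <= X (em j) x + (-2 * w) * X (em j.+1) x + w ^ 2 * X (em j.+2) x.
Proof.
move=> h0 h1.
have hd0 : (0 < d)%N by apply: leq_trans hd.
have hj : (j.+2 <= d)%N by move: (ltn_ord j); move: (nat_of_ord j) => k hk; rewrite -(prednK hd0) ltnS.
have hj1 : (j.+1 <= d)%N := ltnW hj.
have hj0 : (j <= d)%N := ltnW hj1.
rewrite (X_em _ hj0) (X_em _ hj1) (X_em _ hj).
set m := (d - j.+2)%N.
have e1 : (d - j.+1 = m.+1)%N by rewrite /m subnSK.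
have e0 : (d - j = m.+2)%N by rewrite -e1 subnSK.
rewrite e0 e1.
set a := x i0; set b := x i1.
have -> : a ^ j * b ^ m.+2 + -2 * w * (a ^ j.+1 * b ^ m.+1) + w ^ 2 * (a ^ j.+2 * b ^ m)
  = a ^ j * b ^ m * ((b - w * a) * (b - w * a)) by cbn [pow]; rring.
apply: Rmult_le_pos; [apply: Rmult_le_pos; exact: pow_le | exact: Rle_0_sqr].
Qed.

Lemma fw_copos w : copositive (fw w).
Proof.
move=> x hx; rewrite eval_fw.
have : 0 <= \big[Rplus/0]_(j < d.-1) (X (em j) x + (-2 * w) * X (em j.+1) x + w ^ 2 * X (em j.+2) x).
  apply: sumR_ge0 => j _; exact: term_nonneg.
have : 0 <= \big[Rplus/0]_a (other a * X a x).
  apply: sumR_ge0 => a _; apply: Rmult_le_pos; last exact: X_ge0.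
  rewrite /other; case: ifP => _; lra.
lra.
Qed.

End Forms.




Section Forms2.
Variables (n' d : nat).
Hypothesis hd : (2 <= d)%N.
Local Notation n := n'.+2.
Local Notation em := (@em n' d).
Local Notation fw := (@fw n' d).
Local Notation X := (@X n' d).
Local Notation xstar := (@xstar n').
Local Notation i0 := (@i0 n').
Local Notation i1 := (@i1 n').
Local Notation delta := (@delta n' d).
Local Notation other := (@other n' d).

Lemma xstar_i0 w : xstar w i0 = 1. Proof. by []. Qed.
Lemma xstar_i1 w : xstar w i1 = w. Proof. by []. Qed.
Lemma xstar_ge0 w : 0 <= w -> forall i, 0 <= xstar w i.
Proof. move=> hw i; rewrite /xstar; case: ifP => _; [lra|case: ifP => _; lra]. Qed.

Lemma eval_fw_xstar w : eval_form (fw w) (xstar w) = 0.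
Proof.
have e2 : \big[Rplus/0]_(a : mon n d) (other a * X a (xstar w)) = 0.
  by apply: big1 => a _; exact: other_X_xstar.
rewrite eval_fw e2 big1; first rring.
move=> j _.
have hd0 : (0 < d)%N by apply: leq_trans hd.
have hj : (j.+2 <= d)%N by move: (ltn_ord j); move: (nat_of_ord j) => k hk; rewrite -(prednK hd0) ltnS.
have hj1 : (j.+1 <= d)%N := ltnW hj.
have hj0 : (j <= d)%N := ltnW hj1.
rewrite (X_em _ hj0) (X_em _ hj1) (X_em _ hj) xstar_i0 xstar_i1.
set m := (d - j.+2)%N.
have e1 : (d - j.+1 = m.+1)%N by rewrite /m subnSK.
have e0 : (d - j = m.+2)%N by rewrite -e1 subnSK.
rewrite e0 e1 !pow1; cbn [pow]; rring.
Qed.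

Lemma em_binary (a : mon n d) :
  (nat_of_ord (val a i0) + nat_of_ord (val a i1) == d)%N -> a = em (val a i0).
Proof.
move=> /eqP hb.
have hk : (nat_of_ord (val a i0) <= d)%N by apply: (leq_trans _ (eq_leq hb)); exact: leq_addr.
have hrest : (\sum_(i < n') nat_of_ord (val a (i2 i)) == 0)%N.
  have := valP a; rewrite sum_decompN => /eqP e.
  move: hb e; move: (nat_of_ord (val a i0)) (nat_of_ord (val a i1)) (\sum_(i < n') _)%N => p q s.
  move=> <-; rewrite addnA => /eqP; rewrite -{2}[(p + q)%N]addn0 eqn_add2l; by [].
move: hrest; rewrite sum_nat_eq0 => /forallP hrest.
apply: val_inj; apply/ffunP => i; apply: val_inj => /=.
case: i => m hi; case: m hi => [|[|k]] hi.
- have -> : Ordinal hi = i0 by apply: val_inj.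
  by rewrite exv_i0 (minn_idPl hk).
- have -> : Ordinal hi = i1 by apply: val_inj.
  rewrite exv_i1 (minn_idPl hk); apply/eqP; by rewrite -(eqn_add2l (val a i0)) subnKC // hb.
- have hk' : (k < n')%N by [].
  have -> : Ordinal hi = i2 (Ordinal hk') by apply: val_inj.
  rewrite exv_i2; apply/eqP; exact: (hrest (Ordinal hk')).
Qed.

Lemma delta_ge0 b a : 0 <= delta b a.
Proof. rewrite /delta; case: ifP => _; lra. Qed.

Lemma fw_ge1 a : 1 <= fw (-1) a.
Proof.
have ht : forall j : 'I_d.-1, 0 <= delta (em j) a + (-2 * -1) * delta (em j.+1) a + (-1) ^ 2 * delta (em j.+2) a.
  move=> j; have := delta_ge0 (em j) a; have := delta_ge0 (em j.+1) a; have := delta_ge0 (em j.+2) a.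
  simpl; nra.
rewrite /fw /Tw /other; case: ifP => hb; last first.
  rewrite -{1}[1]Rplus_0_l; apply: Rplus_le_compat_r; apply: sumR_ge0 => j _; exact: ht.
rewrite Rplus_0_r.
have ea := em_binary hb.
set k := nat_of_ord (val a i0) in ea.
have hk : (k <= d)%N by apply: (leq_trans _ (eq_leq (eqP hb))); exact: leq_addr.
have hd1 : (d.-2 < d.-1)%N by case: (d) hd => [|[|dd]].
suff [j0 hj0] : exists j0 : 'I_d.-1, 1 <= delta (em j0) a + (-2 * -1) * delta (em j0.+1) a + (-1) ^ 2 * delta (em j0.+2) a.
  apply: Rle_trans hj0 _; exact: (sumR_ge_term _ ht).
have d1 : forall (b : mon n d), 1 <= 1 * delta b b by move=> b; rewrite /delta eqxx; lra.
case: (ltnP k d.-1) => hkd.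
  exists (Ordinal hkd) => /=.
  have := d1 a; rewrite {2}ea.
  have := delta_ge0 (em k.+1) a; have := delta_ge0 (em k.+2) a; simpl; rewrite ea; nra.
exists (Ordinal hd1) => /=.
have := delta_ge0 (em d.-2) a; have := delta_ge0 (em d.-2.+1) a; have := delta_ge0 (em d.-2.+2) a.
have : k = d.-2.+1 \/ k = d.-2.+2.
  move: hkd hk; case: (d) hd => [|[|dd]] // _; rewrite /=.
  move=> h1 h2; have : (k == dd.+1) || (k == dd.+2).
    case: (ltngtP k dd.+2) => [hlt|hgt|->]; [by rewrite eqn_leq -ltnS hlt h1 | by rewrite ltnNge h2 in hgt | by apply/orP; right].
  by case/orP => /eqP ->; [left|right].
case=> e; rewrite ea e /delta eqxx; simpl; nra.
Qed.

End Forms2.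




Lemma cdist_ge n d (f g : form n d) a : Rabs (f a - g a) <= cdist f g.
Proof. exact: (maxR_ge (fun a => Rabs (f a - g a))). Qed.

Lemma cdist_self n d (f : form n d) : cdist f f <= 0.
Proof.
apply: maxR_le => [|a]; first lra.
rewrite Rminus_diag Rabs_R0; lra.
Qed.

Section Forms3.
Variables (n' d : nat).
Hypothesis hd : (2 <= d)%N.
Local Notation n := n'.+2.
Local Notation em := (@em n' d).
Local Notation fw := (@fw n' d).
Local Notation X := (@X n' d).
Local Notation xstar := (@xstar n').
Local Notation delta := (@delta n' d).

Lemma cdist_pert (f : form n d) b c : cdist f (fun a => f a + c * delta b a) <= Rabs c.
Proof.
apply: maxR_le => [|a]; first exact: Rabs_pos.
have -> : f a - (f a + c * delta b a) = - (c * delta b a) by rring.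
rewrite Rabs_Ropp Rabs_mult /delta; case: ifP => _.
  rewrite Rabs_R1; lra.
rewrite Rabs_R0; have := Rabs_pos c; nra.
Qed.

Lemma fw_interior : cinterior (@copositive n d) (fw (-1)).
Proof.
exists 1; split; first lra.
move=> g hg x hx; rewrite /eval_form.
apply: sumR_ge0 => a _; apply: Rmult_le_pos; last exact: (X_ge0 a hx).
have := cdist_ge (fw (-1)) g a; have := @fw_ge1 n' d hd a; have := Rle_abs (fw (-1) a - g a).
lra.
Qed.

Lemma fw_boundary w : 0 < w -> cboundary (@copositive n d) (fw w).
Proof.
move=> hw eps he; split.
  exists (fw w); split; [have := cdist_self (fw w); lra | exact: fw_copos].
exists (fun a => fw w a + (-(eps/2)) * delta (em d) a); split.
  have := cdist_pert (fw w) (em d) (-(eps/2)); rewrite Rabs_Ropp Rabs_pos_eq; lra.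
move=> hc; have := hc (xstar w) (xstar_ge0 (Rlt_le _ _ hw)).
rewrite eval_lin (@eval_fw_xstar n' d hd) eval_delta (X_em _ (leqnn d)) xstar_i0 xstar_i1 subnn pow1 /=.
lra.
Qed.

Lemma IsPoly_fw a : IsPoly (fun w => fw w a).
Proof.
rewrite /fw /Tw; ispoly.
eapply (@IsPoly_bigop _ Rplus 0 (fun f g hf hg => IsPoly_add hf hg)). move=> j.
ispoly.
Qed.

Lemma IsPoly_phi (phi : form n d -> R) : poly_in_coeffs phi -> IsPoly (fun w => phi (fw w)).
Proof.
move=> [s hs].
apply: (IsPoly_ext (f := fun w => foldr (fun (t : R * (mon n d -> nat)) acc =>
                   (fst t * \big[Rmult/1]_(a : mon n d) (fw w a ^ snd t a) + acc)) 0 s)); last first.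
  by move=> w; rewrite hs.
elim: s {hs} => [|t s IH] /=; first exact: IsPoly_const.
apply: IsPoly_add IH; apply: IsPoly_mul; first exact: IsPoly_const.
eapply (@IsPoly_bigop _ Rmult 1 (fun f g hf hg => IsPoly_mul hf hg)) => a.
apply: IsPoly_pow; exact: IsPoly_fw.
Qed.

Lemma part1 : ~ exists phi : form n d -> R,
       poly_in_coeffs phi /\
       (forall f, cinterior (@copositive n d) f -> (0 < phi f)%Re) /\
       (forall f, cboundary (@copositive n d) f -> phi f = 0%Re).
Proof.
move=> [phi [hp [hint hbd]]].
have z := IsPoly_zero (IsPoly_phi hp) (fun w hw => hbd _ (fw_boundary hw)) (-1).
have := hint _ fw_interior; simpl in z; lra.
Qed.

End Forms3.




Section Bil.
Variable m : nat.

Definition bil (A : rmat m) (x y : 'I_m -> R) : R :=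
  \big[Rplus/0]_(i < m) \big[Rplus/0]_(j < m) (x i * A i j * y j).
Definition sq (v : 'I_m -> R) : R := \big[Rplus/0]_(i < m) (v i * v i).
Definition vM (v : 'I_m -> R) (A : rmat m) : 'I_m -> R :=
  fun j => \big[Rplus/0]_(i < m) (v i * A i j).

Lemma qform_bil A v : qform A v = bil A v v. Proof. by []. Qed.

Lemma bil_vM A x y : bil A x y = \big[Rplus/0]_(j < m) (vM x A j * y j).
Proof.
rewrite /bil exchange_big /=; apply: eq_bigr => j _.
rewrite /vM sumR_distrl; apply: eq_bigr => i _; rring.
Qed.

Lemma sq_vM A v : sq (vM v A) = bil A v (vM v A).
Proof. by rewrite bil_vM. Qed.

Lemma bil_sym A x y : sym_mat A -> bil A x y = bil A y x.
Proof.
move=> hs; rewrite /bil exchange_big /=; apply: eq_bigr => i _; apply: eq_bigr => j _.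
rewrite hs; rring.
Qed.

Lemma bil_linl A x y z t :
  bil A (fun i => x i + t * y i) z = bil A x z + t * bil A y z.
Proof.
rewrite /bil sumR_distrr -big_split /=; apply: eq_bigr => i _.
rewrite sumR_distrr -big_split /=; apply: eq_bigr => j _; rring.
Qed.

Lemma bil_linr A x y z t :
  bil A z (fun i => x i + t * y i) = bil A z x + t * bil A z y.
Proof.
rewrite /bil sumR_distrr -big_split /=; apply: eq_bigr => i _.
rewrite sumR_distrr -big_split /=; apply: eq_bigr => j _; rring.
Qed.

Lemma qform_comb A x y t : sym_mat A ->
  qform A (fun i => x i + t * y i) = qform A x + 2 * t * bil A x y + t * t * qform A y.
Proof.
move=> hs; rewrite !qform_bil bil_linl !bil_linr (bil_sym y x hs); rring.
Qed.

Lemma disc_le a b c : 0 <= c -> (forall t, 0 <= a + 2 * t * b + t * t * c) -> b * b <= a * c.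
Proof.
move=> hc h.
case: (Rle_lt_or_eq_dec 0 c hc) => hc'.
  have := h (- b / c).
  have -> : a + 2 * (- b / c) * b + - b / c * (- b / c) * c = (a * c - b * b) / c by field; lra.
  move=> h'; have : 0 <= (a * c - b * b) / c * c by apply: Rmult_le_pos; lra.
  have -> : (a * c - b * b) / c * c = a * c - b * b by field; lra.
  lra.
subst c.
case: (Req_dec b 0) => hb; first by subst b; lra.
have := h (- (a + 1) / (2 * b)).
have -> : a + 2 * (- (a + 1) / (2 * b)) * b + - (a + 1) / (2 * b) * (- (a + 1) / (2 * b)) * 0 = -1
  by field.
lra.
Qed.

Lemma psd_CS A x y : sym_mat A -> psd A -> bil A x y * bil A x y <= qform A x * qform A y.
Proof.
move=> hs hp; apply: disc_le; first exact: hp.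
move=> t; rewrite -qform_comb //; exact: hp.
Qed.

Lemma sq_ge0 v : 0 <= sq v.
Proof. apply: sumR_ge0 => i _; exact: Rle_0_sqr. Qed.

Lemma sq_term v i : v i * v i <= sq v.
Proof. rewrite /sq (bigD1 i) //= -{1}[v i * v i]Rplus_0_r; apply: Rplus_le_compat_l; apply: sumR_ge0 => k _; exact: Rle_0_sqr. Qed.

Lemma prod_le_sq v i j : Rabs (v i * v j) <= sq v.
Proof.
have h1 := sq_term v i; have h2 := sq_term v j.
rewrite Rabs_mult.
have := Rabs_pos (v i); have := Rabs_pos (v j).
have e1 : Rabs (v i) * Rabs (v i) = v i * v i by rewrite -Rabs_mult Rabs_pos_eq //; exact: Rle_0_sqr.
have e2 : Rabs (v j) * Rabs (v j) = v j * v j by rewrite -Rabs_mult Rabs_pos_eq //; exact: Rle_0_sqr.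
nra.
Qed.

Definition Kmat (B : rmat m) := \big[Rplus/0]_(i < m) \big[Rplus/0]_(j < m) Rabs (B i j).

Lemma Kmat_ge0 B : 0 <= Kmat B.
Proof. apply: sumR_ge0 => i _; apply: sumR_ge0 => j _; exact: Rabs_pos. Qed.

Lemma qform_bound B v : qform B v <= Kmat B * sq v.
Proof.
rewrite /qform /Kmat sumR_distrl; apply: sumR_le => i _.
rewrite sumR_distrl; apply: sumR_le => j _.
have h := prod_le_sq v i j.
have e : v i * B i j * v j = B i j * (v i * v j) by rring.
rewrite e; apply: Rle_trans (Rle_abs _) _; rewrite Rabs_mult.
apply: Rmult_le_compat_l => //; exact: Rabs_pos.
Qed.

Definition KN (N : rmat m) := \big[Rplus/0]_(j < m) Kmat (fun i k => N i j * N k j).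

Lemma KN_ge0 N : 0 <= KN N.
Proof. apply: sumR_ge0 => j _; exact: Kmat_ge0. Qed.

Lemma sq_vM_bound u N : sq (vM u N) <= KN N * sq u.
Proof.
rewrite /sq /KN sumR_distrl; apply: sumR_le => j _.
have -> : vM u N j * vM u N j = qform (fun i k => N i j * N k j) u.
  rewrite /vM /qform sumR_distrl; apply: eq_bigr => i _.
  rewrite sumR_distrr; apply: eq_bigr => k _; rring.
exact: qform_bound.
Qed.

Lemma qform_add A B c v :
  @qform m (fun i j => A i j + c * B i j) v = qform A v + c * qform B v.
Proof.
rewrite /qform sumR_distrr -big_split /=; apply: eq_bigr => i _.
rewrite sumR_distrr -big_split /=; apply: eq_bigr => j _; rring.
Qed.

End Bil.



Definition Req_bool (x y : R) : bool := if Req_EM_T x y then true else false.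
Lemma Req_boolP : Equality.axiom Req_bool.
Proof. move=> x y; rewrite /Req_bool; case: Req_EM_T => h; by constructor. Qed.
HB.instance Definition _ := hasDecEq.Build R Req_boolP.

Definition R_find (P : pred R) (_ : nat) : option R :=
  match excluded_middle_informative (exists x, P x) with
  | left h => Some (proj1_sig (constructive_indefinite_description _ h))
  | right _ => None
  end.
Lemma R_find_correct P n x : R_find P n = Some x -> P x.
Proof. rewrite /R_find; case: excluded_middle_informative => // h [<-].
  exact: proj2_sig (constructive_indefinite_description _ h). Qed.
Lemma R_find_complete (P : pred R) : (exists x, P x) -> exists n, R_find P n.
Proof. move=> h; exists 0%N; rewrite /R_find; case: excluded_middle_informative => //. Qed.
Lemma R_find_ext (P Q : pred R) : P =1 Q -> R_find P =1 R_find Q.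
Proof. move=> h; have -> : P = Q by apply: functional_extensionality. by []. Qed.
HB.instance Definition _ := hasChoice.Build R R_find_correct R_find_complete R_find_ext.




Lemma R_addN : left_inverse R0 Ropp Rplus. Proof. move=> *; ring. Qed.
HB.instance Definition _ := GRing.isZmodule.Build R R_addA R_addC R_add0 R_addN.




Lemma R_10 : R1 != R0.
Proof. apply/eqP; exact: R1_neq_R0. Qed.
HB.instance Definition _ := GRing.Zmodule_isComNzRing.Build R R_mulA R_mulC R_mul1 R_mulD R_10.
Lemma R_mulV (x : R) : x != R0 -> Rmult (Rinv x) x = R1.
Proof. move/eqP=> h; field; exact: h. Qed.
Lemma R_inv0 : Rinv R0 = R0. Proof. exact: Rinv_0. Qed.
HB.instance Definition _ := GRing.ComNzRing_isField.Build R R_mulV R_inv0.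


Definition mx m (A : rmat m) : 'M[R]_m := \matrix_(i, j) A i j.

Lemma sumGR (I : Type) (r : seq I) (P : pred I) (F : I -> R) :
  (\sum_(i <- r | P i) F i)%R = \big[Rplus/0]_(i <- r | P i) F i.
Proof. by []. Qed.

Lemma det_pd m (A : rmat m) : pd A -> (\det (mx A) != 0)%R.
Proof.
move=> hp; apply/negP => /det0P [v hv0 hvA].
have hq : qform A (fun i => v ord0 i) = 0.
  rewrite qform_bil bil_vM big1 // => j _.
  have e : vM (fun i => v ord0 i) A j = 0.
    have : (v *m mx A)%R ord0 j = 0%R by rewrite hvA mxE.
    rewrite mxE sumGR => e0; apply: eq_trans e0; rewrite /vM; apply: eq_bigr => i _; by rewrite mxE.
  rewrite e; rring.
have [i hi] : exists i, v ord0 i <> 0.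
  apply: NNPP => h; move/negP: hv0; apply; apply/eqP/rowP => i; rewrite !mxE.
  apply: NNPP => hi; apply: h; by exists i.
have := hp _ (ex_intro _ i hi); rewrite hq; lra.
Qed.

Lemma inv_ex m (A : rmat m) : (\det (mx A) != 0)%R ->
  exists N : rmat m, forall v j, v j = vM (vM v A) N j.
Proof.
move=> hd; have hu : mx A \in unitmx by rewrite unitmxE GRing.unitfE.
exists (fun i j => invmx (mx A) i j) => v j.
have e := mulmxK hu (\row_i v i)%R.
transitivity ((\row_i v i)%R ord0 j); first by rewrite mxE.
rewrite -{1}e mxE sumGR /vM; apply: eq_bigr => k _.
rewrite mxE sumGR; congr (_ * _); apply: eq_bigr => i _; by rewrite !mxE.
Qed.

Lemma IsPoly_det m (M : R -> rmat m) :
  (forall i j, IsPoly (fun w => M w i j)) -> IsPoly (fun w => \det (mx (M w)))%R.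
Proof.
move=> h.
apply: (IsPoly_ext (f := fun w => (\sum_(s : 'S_m) (-1) ^+ s * \prod_i M w i (s i))%R)); last first.
  move=> w; rewrite /determinant; apply: eq_bigr => s _; congr (_ * _)%R.
  apply: eq_bigr => i _; by rewrite mxE.
eapply (@IsPoly_bigop _ GRing.add 0%R (fun f g hf hg => IsPoly_add hf hg)) => s.
exact: (IsPoly_mul (IsPoly_const ((-1) ^+ s)%R)
          (@IsPoly_bigop _ GRing.mul 1%R (fun f g hf hg => IsPoly_mul hf hg) _ _ (fun i w => M w i (s i)) (fun i => h i (s i)))).
Qed.

Section LMI.
Variables (n' d : nat).
Hypothesis hd : (2 <= d)%N.
Local Notation n := n'.+2.
Local Notation em := (@em n' d).
Local Notation fw := (@fw n' d).
Local Notation xstar := (@xstar n').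
Local Notation delta := (@delta n' d).

Lemma pencil_pert m (L0 : rmat m) (La : mon n d -> rmat m) (f : form n d) b c i j :
  pencil L0 La (fun a => f a + c * delta b a) i j = pencil L0 La f i j + c * La b i j.
Proof.
rewrite /pencil.
have -> : \big[Rplus/0]_a ((f a + c * delta b a) * La a i j) =
   \big[Rplus/0]_a (f a * La a i j) + c * \big[Rplus/0]_a (delta b a * La a i j).
  rewrite sumR_distrr -big_split /=; apply: eq_bigr => a _; rring.
rewrite /delta (sumR_delta b (fun a => La a i j)); by rewrite Rplus_assoc.
Qed.

Lemma pencil_sym m (L0 : rmat m) (La : mon n d -> rmat m) (f : form n d) :
  sym_mat L0 -> (forall a, sym_mat (La a)) -> sym_mat (pencil L0 La f).
Proof.
move=> hs0 hsa i j; rewrite /pencil hs0; congr (_ + _); apply: eq_bigr => a _.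
by rewrite (hsa a).
Qed.

Lemma part2 : ~ lmi_representable n d.
Proof.
move=> [m [L0 [La [hs0 [hsa [hiff hpd]]]]]].
pose A := fun w => pencil L0 La (fw w).
have hsA : forall w, sym_mat (A w) by move=> w; exact: pencil_sym.
have hPoly : IsPoly (fun w => \det (mx (A w)))%R.
  apply: IsPoly_det => i j; rewrite /A /pencil.
  apply: IsPoly_add; first exact: IsPoly_const.
  eapply (@IsPoly_bigop _ Rplus 0 (fun f g hf hg => IsPoly_add hf hg)) => a.
  apply: IsPoly_mul; [exact: IsPoly_fw | exact: IsPoly_const].
have hneg : (\det (mx (A (-1))) != 0)%R := det_pd (hpd _ (fw_interior n' hd)).
have hzero : forall w, 0 < w -> (\det (mx (A w)))%R = 0.
  move=> w hw; apply: NNPP => hne.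
  have hne' : (\det (mx (A w)) != 0)%R by apply/eqP.
  have [N hN] := inv_ex hne'.
  have hpsd : psd (A w) by apply/hiff; exact: fw_copos.
  pose B := La (em d).
  pose K := Kmat B * KN N * Kmat (A w).
  have hK : 0 <= K.
    apply: Rmult_le_pos; [apply: Rmult_le_pos|]; [exact: Kmat_ge0 | exact: KN_ge0 | exact: Kmat_ge0].
  pose del := / (K + 1).
  have hdel0 : 0 < del by apply: Rinv_0_lt_compat; lra.
  have hdel : del * K = 1 - del by rewrite /del; field; lra.
  pose g := fun a => fw w a + (- del) * delta (em d) a.
  have hng : ~ copositive g.
    move=> hc; have := hc (xstar w) (xstar_ge0 (Rlt_le _ _ hw)).
    rewrite eval_lin (@eval_fw_xstar n' d hd) eval_delta (X_em _ (leqnn d)) xstar_i0 xstar_i1 subnn pow1 /=.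
    lra.
  have [v hv] : exists v, qform (pencil L0 La g) v < 0.
    apply: NNPP => h; apply: hng; apply/hiff => v; apply: Rnot_lt_le => hl; apply: h; by exists v.
  have e : pencil L0 La g = fun i j => A w i j + (- del) * B i j.
    apply: functional_extensionality => i; apply: functional_extensionality => j.
    exact: pencil_pert.
  rewrite e qform_add in hv.
  have hq0 : 0 <= qform (A w) v := hpsd v.
  have h1 : qform B v <= Kmat B * sq v := qform_bound B v.
  have h2 : sq v <= KN N * sq (vM v (A w)).
    have -> : sq v = sq (vM (vM v (A w)) N).
      by rewrite /sq; apply: eq_bigr => i _; rewrite -hN.
    exact: sq_vM_bound.
  have h3 : sq (vM v (A w)) <= Kmat (A w) * qform (A w) v.
    have hs := sq_ge0 (vM v (A w)).
    have hcs := psd_CS v (vM v (A w)) (hsA w) hpsd.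
    rewrite -sq_vM in hcs.
    have hb := qform_bound (A w) (vM v (A w)).
    have hKA := Kmat_ge0 (A w).
    case: (Rle_lt_or_eq_dec 0 _ hs) => hs'; last by rewrite -hs'; nra.
    apply: (Rmult_le_reg_l (sq (vM v (A w)))) => //.
    apply: Rle_trans hcs _.
    have := Rmult_le_compat_l _ _ _ hq0 hb.
    nra.
  have h4 : qform B v <= K * qform (A w) v.
    have hKB := Kmat_ge0 B; have hKN := KN_ge0 N; have hKA := Kmat_ge0 (A w).
    apply: Rle_trans h1 _.
    have := Rmult_le_compat_l _ _ _ hKN h3.
    have := Rmult_le_compat_l _ _ _ hKB h2.
    rewrite /K; nra.
  have := Rmult_le_compat_l _ _ _ (Rlt_le _ _ hdel0) h4.
  nra.
have z := IsPoly_zero hPoly hzero (-1).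
by move/eqP: hneg; apply.
Qed.

End LMI.

Theorem mainTheorem17 (n d : nat) (hn : (2 <= n)%N) (hd : (2 <= d)%N) :
  (~ exists phi : form n d -> R,
       poly_in_coeffs phi /\
       (forall f, cinterior (@copositive n d) f -> (0 < phi f)%Re) /\
       (forall f, cboundary (@copositive n d) f -> phi f = 0%Re)) /\
  ~ lmi_representable n d.
Proof.
case: n hn => [|[|n']] // _.
split; [exact: part1 | exact: part2].
Qed.
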